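(* (i) Let $n\ge 2$ and let $G$ be an induced subgraph of $Q_n$ with at least $2^{n-1}+1$ vertices. Then some vertex $v$ of $G$ satisfies $\deg_G(v)>\tfrac12\log_2 n-\tfrac12\log_2\log_2 n+\tfrac12$. (ii) For every $n\ge1$ there exists an induced subgraph $G$ of $Q_n$ with exactly $2^{n-1}+1$ vertices such that $\Delta(G)<\sqrt{n}+1$.
   Context: $Q_n$ is the $n$-dimensional hypercube graph on $\{0,1\}^n$, two vertices adjacent iff they differ in exactly one coordinate. $\Delta(G)$ denotes the maximum degree of $G$. *)

(* Defs.v *)
From mathcomp Require Import all_boot.
From Stdlib Require Import Reals.

Set Implicit Arguments.
Unset Strict Implicit.
Unset Printing Implicit Defensive.

Definition cube (n : nat) : finType := {ffun 'I_n -> bool}.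

Definition hadj (n : nat) (u v : cube n) : bool :=
  #|[set i : 'I_n | u i != v i]| == 1%N.

(* An induced subgraph of Q_n is given by its vertex set S.
   Degree of v in the induced subgraph Q_n[S]. *)
Definition deg (n : nat) (S : {set cube n}) (v : cube n) : nat :=
  #|[set u in S | hadj u v]|.

Definition maxdeg (n : nat) (S : {set cube n}) : nat :=
  \max_(v in S) deg S v.

Definition log2 (x : R) : R := (ln x / ln 2)%R.

(* Main.v *)
Require Import Defs.
From Stdlib Require Import Reals Lra Lia.

Section RealPart.
Local Open Scope R_scope.


Lemma ln_le_sub1 y : 0 < y -> ln y <= y - 1.
Proof.
intros Hy. destruct (Req_dec y 1) as [->|ne].
- rewrite ln_1; lra.
- assert (ln y <> 0) by (apply ln_neq_0; auto).
  pose proof (exp_ineq1 (ln y) H). rewrite exp_ln in H0 by auto. lra.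
Qed.

Lemma ln2_gt : 3/5 < ln 2.
Proof.
assert (e3 : exp 3 = exp 1 * exp 1 * exp 1).
{ replace 3 with (1 + 1 + 1) by ring. rewrite !exp_plus. ring. }
pose proof exp_le_3. pose proof (exp_pos 1).
assert (exp 3 < 2 ^ 5) by (rewrite e3; simpl; nra).
apply ln_increasing in H1; [|apply exp_pos].
rewrite ln_exp, ln_pow in H1 by lra. simpl in H1. lra.
Qed.

Lemma ln_le_mono x y : 0 < x -> x <= y -> ln x <= ln y.
Proof.
intros hx hxy. destruct (Req_dec x y) as [->|ne]; [lra|].
left; apply ln_increasing; lra.
Qed.

Lemma ln_sqrt_eq y : 0 < y -> ln y = 2 * ln (sqrt y).
Proof.
intros hy. rewrite <- (sqrt_sqrt y) at 1 by lra.
rewrite ln_mult by (apply sqrt_lt_R0; lra). ring.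
Qed.

Lemma real_part1 (x : R) : 2 <= x ->
  / 2 * log2 x - / 2 * log2 (log2 x) + / 2 < sqrt x.
Proof.
intros hx. unfold log2.
pose proof ln2_gt as ha. set (a := ln 2) in *.
assert (hL : 1 <= ln x / a).
{ apply (Rmult_le_reg_r a); [lra|]. unfold Rdiv. rewrite Rmult_assoc, Rinv_l by lra.
  rewrite Rmult_1_r, Rmult_1_l. apply ln_le_mono; lra. }
assert (hLL : 0 <= ln (ln x / a) / a).
{ apply Rmult_le_pos; [|left; apply Rinv_0_lt_compat; lra].
  rewrite <- ln_1. apply ln_le_mono; lra. }
set (t := sqrt x). set (s := sqrt t).
assert (ht : 1 <= t). { unfold t. rewrite <- sqrt_1. apply sqrt_le_1_alt. lra. }
assert (hs : 1 <= s). { unfold s. rewrite <- sqrt_1. apply sqrt_le_1_alt. lra. }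
assert (hst : s * s = t) by (unfold s; apply sqrt_sqrt; lra).
assert (hlnx : ln x = 4 * ln s).
{ rewrite (ln_sqrt_eq x) by lra. fold t. rewrite (ln_sqrt_eq t) by lra. fold s. ring. }
pose proof (ln_le_sub1 s ltac:(lra)) as hls.
assert (key : ln x < (2 * t - 1) * a).
{ rewrite hlnx, <- hst. assert ((2 * (s*s) - 1) * (3/5) <= (2 * (s*s) - 1) * a) by nra.
  pose proof (Rle_0_sqr (s - 5/3)) as hsq; unfold Rsqr in hsq.
  assert (4 * (s - 1) < (2 * (s*s) - 1) * (3/5)) by nra.
  lra. }
assert (hdiv : ln x / a < 2 * t - 1).
{ apply (Rmult_lt_reg_r a); [lra|]. unfold Rdiv. rewrite Rmult_assoc, Rinv_l by lra. lra. }
lra.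
Qed.

Lemma real_part2 (k n : nat) : (k * k < n)%nat -> INR (S k) < sqrt (INR n) + 1.
Proof.
intros h. rewrite S_INR.
assert (INR k < sqrt (INR n)).
{ rewrite <- (sqrt_square (INR k)) by apply pos_INR.
  apply sqrt_lt_1_alt. split. apply Rmult_le_pos; apply pos_INR.
  rewrite <- mult_INR. apply lt_INR. exact h. }
lra.
Qed.

Lemma two_le_INR n : (2 <= n)%nat -> 2 <= INR n.
Proof. intros H; apply le_INR in H; simpl in H; lra. Qed.


End RealPart.

From mathcomp Require Import Rstruct.
From mathcomp Require Import all_boot all_order all_algebra.
From mathcomp Require Import ring zify.
Set Implicit Arguments.
Unset Strict Implicit.
Unset Printing Implicit Defensive.
Import Order.TTheory GRing.Theory Num.Theory.


Section Flip.
Variable n : nat.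
Definition flip (x : cube n) (i : 'I_n) : cube n :=
  [ffun j => if j == i then ~~ x j else x j].

Lemma flipE x i j : flip x i j = if j == i then ~~ x j else x j.
Proof. by rewrite ffunE. Qed.

Lemma flipK x i : flip (flip x i) i = x.
Proof. apply/ffunP=> j; rewrite !flipE; case: eqP => // ->; exact: negbK. Qed.

Lemma flipC x i j : flip (flip x i) j = flip (flip x j) i.
Proof.
apply/ffunP=> k; rewrite !flipE; case: (k =P j); case: (k =P i) => //.
Qed.

Lemma flip_inj x : injective (flip x).
Proof.
move=> i j /ffunP /(_ i); rewrite !flipE eqxx; case: eqP => // _.
by case: (x i).
Qed.

Lemma hadj_flip x i : hadj (flip x i) x.
Proof.
rewrite /hadj; apply/eqP; rewrite -(cards1 i); apply: eq_card => j.
rewrite !inE flipE; case: (j =P i) => [->|/eqP ne].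
  by case: (x i).
by rewrite eqxx.
Qed.

Lemma hadjP u x : hadj u x -> exists i, u = flip x i.
Proof.
rewrite /hadj => /cards1P [i Hi]; exists i; apply/ffunP=> j.
rewrite flipE; move/setP: Hi => /(_ j); rewrite !inE.
case: (j =P i) => [-> |_] /=; first by case: (u i); case: (x i).
by move/negbFE/eqP.
Qed.

Definition weight (x : cube n) := #|[set j | x j]|.

Lemma weight_flip x i : odd (weight (flip x i)) = ~~ odd (weight x).
Proof.
rewrite /weight; case Hx: (x i).
- have -> : [set j | flip x i j] = [set j | x j] :\ i.
    by apply/setP=> j; rewrite !inE flipE; case: (j =P i) => [->|]; rewrite ?Hx.
  rewrite (cardsD1 i [set j | x j]) inE Hx /=; by rewrite negbK.
- have -> : [set j | flip x i j] = i |: [set j | x j].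
    by apply/setP=> j; rewrite !inE flipE; case: (j =P i) => [->|]; rewrite ?Hx.
  by rewrite cardsU1 inE Hx.
Qed.

End Flip.

Section Signed.
Variable F : realFieldType.
Local Open Scope ring_scope.
Variable n : nat.

Definition sgn (x : cube n) (i : 'I_n) : F :=
  (-1) ^+ (odd #|[set j : 'I_n | (j < i)%N && x j]|).

Lemma sgn_flip_same (x : cube n) (i : 'I_n) : sgn (flip x i) i = sgn x i.
Proof.
rewrite /sgn; congr (_ ^+ odd _); apply: eq_card => j; rewrite !inE flipE.
case: (j =P i) => // ->; by rewrite ltnn.
Qed.

Lemma sgn_flip_gt (x : cube n) (i j : 'I_n) : (j < i)%N -> sgn (flip x i) j = sgn x j.
Proof.
move=> ji; rewrite /sgn; congr (_ ^+ odd _); apply: eq_card => k; rewrite !inE flipE.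
case: (k =P i) => // ->; rewrite ltnNge (ltnW ji) //.
Qed.

Lemma sgn_flip_lt (x : cube n) (i j : 'I_n) : (i < j)%N -> sgn (flip x i) j = - sgn x j.
Proof.
move=> ij; rewrite /sgn -signrN; congr (_ ^+ _).
case Hx: (x i).
- have -> : [set k : 'I_n | (k < j)%N && flip x i k] = [set k : 'I_n | (k < j)%N && x k] :\ i.
    by apply/setP=> k; rewrite !inE flipE; case: (k =P i) => [->|]; rewrite ?Hx ?andbF ?andbT.
  by rewrite (cardsD1 i [set k : 'I_n | (k < j)%N && x k]) inE Hx ij /= negbK.
- have -> : [set k : 'I_n | (k < j)%N && flip x i k] = i |: [set k : 'I_n | (k < j)%N && x k].
    apply/setP=> k; rewrite !inE flipE; case: (k =P i) => [->|]; rewrite ?Hx ?ij //=.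
  by rewrite cardsU1 inE Hx andbF.
Qed.

Lemma sgn_sq (x : cube n) (i : 'I_n) : sgn x i * sgn x i = 1.
Proof. by rewrite /sgn -signr_addb addbb. Qed.

Lemma sgn_norm (x : cube n) (i : 'I_n) : `|sgn x i| = 1.
Proof. by rewrite /sgn normr_sign. Qed.

Definition Aop (f : cube n -> F) (x : cube n) : F :=
  \sum_i sgn x i * f (flip x i).

Lemma Aop2 (f : cube n -> F) (x : cube n) : Aop (Aop f) x = n%:R * f x.
Proof.
rewrite /Aop.
pose T i j := sgn x i * sgn (flip x i) j * f (flip (flip x i) j).
pose U i j := if i == j then 0 else T i j.
have eT i : sgn x i * (\sum_j sgn (flip x i) j * f (flip (flip x i) j))
            = f x + \sum_j U i j.
  rewrite mulr_sumr (bigD1 i) //= [X in _ = _ + X](bigD1 i) //= /U eqxx add0r.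
  rewrite mulrA sgn_flip_same sgn_sq mul1r flipK; congr (_ + _).
  apply: eq_bigr => j /negbTE; rewrite eq_sym => -> ; by rewrite /T mulrA.
have antiU i j : U i j = - U j i.
  rewrite /U eq_sym; case: eqP => [_|ne]; first by rewrite oppr0.
  have key : forall a b : 'I_n, (a < b)%N -> T a b = - T b a.
    move=> a b ab; rewrite /T sgn_flip_lt // sgn_flip_gt // flipC.
    by rewrite mulrN mulNr [sgn x b * _]mulrC.
  case: (ltngtP i j) => [ij|ji|]; first exact: key.
  - by rewrite (key _ _ ji) opprK.
  - by move/val_inj => e; case: ne.
have U0 : \sum_i \sum_j U i j = 0.
  set X := \sum_i _.
  have : X = - X.
    rewrite {1}/X exchange_big /= -sumrN; apply: eq_bigr => j _.
    rewrite -sumrN; apply: eq_bigr => i _; exact: antiU.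
  move=> h; have : X *+ 2 = 0 by rewrite mulr2n {1}h addNr.
  by move/eqP; rewrite mulrn_eq0 /= => /eqP.
under eq_bigr do rewrite eT.
by rewrite big_split /= U0 addr0 sumr_const card_ord mulr_natl.
Qed.

End Signed.

Section Part2.

Local Open Scope ring_scope.

Lemma nontriv_sol (F : fieldType) (I J : finType) (K : I -> J -> F) :
  (#|J| < #|I|)%N ->
  exists c : I -> F, (exists i, c i != 0) /\ forall j, \sum_i c i * K i j = 0.
Proof.
move=> HJI.
pose M := \matrix_(a < #|I|, b < #|J|) K (enum_val a) (enum_val b).
have Hnz : kermx M != 0.
  rewrite -mxrank_eq0 mxrank_ker subn_eq0 -ltnNge.
  exact: leq_ltn_trans (rank_leq_col M) HJI.
have : [exists a, exists b, kermx M a b != 0].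
  apply: contraR Hnz => /existsPn h; apply/eqP/matrixP => a b.
  by move: (h a) => /existsPn /(_ b) /negPn /eqP ->; rewrite mxE.
case/existsP => a /existsP [b Hab].
exists (fun u => kermx M a (enum_rank u)); split.
  by exists (enum_val b); rewrite enum_valK.
move=> j.
rewrite (reindex (@enum_val I I)) /=; last first.
  by case: (enum_val_bij I) => g h1 h2; exists g => y _; [exact: h1 | exact: h2].
transitivity ((kermx M *m M) a (enum_rank j)); last by rewrite mulmx_ker mxE.
rewrite mxE; apply: eq_bigr => k _; rewrite enum_valK; congr (_ * _); by rewrite mxE enum_rankK.
Qed.

Section Huang.
Variable F : realFieldType.
Variable n : nat.
Variable lam : F.
Hypothesis lam_gt0 : 0 < lam.
Hypothesis lam2 : lam ^+ 2 = n%:R.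

Lemma AopD (f g : cube n -> F) (a : F) x :
  Aop (fun y => f y + a * g y) x = Aop f x + a * Aop g x.
Proof.
rewrite /Aop mulr_sumr -big_split /=; apply: eq_bigr => i _.
by rewrite mulrDr mulrCA.
Qed.

Lemma card_half (i0 : 'I_n) : #|[set x : cube n | x i0]| = (2 ^ n.-1)%N.
Proof.
have e : #|[set x : cube n | x i0]| = #|~: [set x : cube n | x i0]|.
  have inj : injective (fun x : cube n => flip x i0).
    by move=> x y h; rewrite -(flipK x i0) h flipK.
  rewrite -[RHS](card_imset _ inj).
  apply: eq_card => y; rewrite !inE.
  apply/idP/imsetP => [Hy | [x]].
    exists (flip y i0); last by rewrite flipK.
    by rewrite !inE flipE eqxx Hy.
  by rewrite !inE => Hx ->; rewrite flipE eqxx Hx.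
have := cardsC [set x : cube n | x i0].
rewrite -e card_ffun card_bool card_ord.
clear e; case: n i0 => [|m] i0; first by case: i0.
rewrite expnS /= => h; lia.
Qed.

Lemma huang (S : {set cube n}) : (0 < n)%N -> (2 ^ n.-1 < #|S|)%N ->
  exists2 x, x \in S & lam <= (deg S x)%:R.
Proof.
move=> n_gt0 HS.
pose i0 : 'I_n := Ordinal n_gt0.
pose I : finType := {x : cube n | x i0}.
pose J : finType := {z : cube n | z \notin S}.
have cardI : #|I| = (2 ^ n.-1)%N.
  by rewrite card_sig -(card_half i0); apply: eq_card => x; rewrite !inE.
have cardJ : (#|J| < #|I|)%N.
  rewrite cardI card_sig.
  have := cardsC S; rewrite card_ffun card_bool card_ord.
  have -> : #|[pred x | x \notin S]| = #|~: S| by apply: eq_card => x; rewrite !inE.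
  case: n n_gt0 S HS {i0 I J cardI} => [|m] // _ S' HS'; rewrite expnS /= => h; move: HS'; rewrite /= => HS'; lia.
pose K (u : I) (y : cube n) : F :=
  \sum_i sgn F y i * ((flip y i == val u)%:R) + lam * ((y == val u)%:R).
have [c [[u0 cu0] csol]] := nontriv_sol (fun u (z : J) => K u (val z)) cardJ.
pose C (y : cube n) : F := \sum_u c u * ((y == val u)%:R).
pose v y := Aop C y + lam * C y.
have vK y : v y = \sum_u c u * K u y.
  rewrite /v /Aop /C /K.
  under [RHS]eq_bigr do rewrite mulrDr mulr_sumr.
  rewrite big_split /= exchange_big /=; congr (_ + _).
    apply: eq_bigr => i _; rewrite mulr_sumr; apply: eq_bigr => u _.
    by rewrite mulrCA.
  rewrite mulr_sumr; apply: eq_bigr => u _; by rewrite mulrCA.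
have vJ y : y \notin S -> v y = 0.
  by move=> yS; rewrite vK; exact: (csol (exist _ y yS)).
have Ceig y : Aop v y = lam * v y.
  rewrite /v AopD Aop2 -lam2; ring.
have C0 (y : cube n) : ~~ y i0 -> C y = 0.
  move=> Hy; rewrite /C big1 // => u _.
  case: eqP => [e|]; last by rewrite mulr0.
  by move: (valP u); rewrite -e (negbTE Hy).
have Cu u : C (val u) = c u.
  rewrite /C (bigD1 u) //= eqxx mulr1 big1 ?addr0 // => u' ne.
  by rewrite (inj_eq val_inj) eq_sym (negbTE ne) mulr0.
pose z := flip (val u0) i0.
have zi0 : z i0 = false by rewrite /z flipE eqxx (valP u0).
have vz : v z != 0.
  rewrite /v (C0 z) ?zi0 // mulr0 addr0 /Aop (bigD1 i0) //= big1 ?addr0.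
    by rewrite /z flipK Cu mulf_neq0 // signr_eq0.
  move=> i ne; rewrite C0 ?mulr0 // flipE eq_sym (negbTE ne) zi0 //.
have [x _ Hmax] := @arg_maxP _ _ _ z predT (fun y => `|v y|) isT.
have vx_gt0 : 0 < `|v x|.
  by apply: lt_le_trans (Hmax z isT); rewrite normr_gt0.
have xS : x \in S.
  apply: contraT => xS; move: vx_gt0; by rewrite (vJ _ xS) normr0 ltxx.
exists x => //.
pose P := [set i | flip x i \in S].
have le1 : lam * `|v x| <= (#|P|)%:R * `|v x|.
  rewrite -[lam](ger0_norm (ltW lam_gt0)) -normrM -Ceig /Aop.
  apply: le_trans (ler_norm_sum _ _ _) _.
  apply: le_trans (_ : \sum_i (if flip x i \in S then `|v x| else 0) <= _).
    apply: ler_sum => i _; rewrite normrM sgn_norm mul1r.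
    case: ifP => [_|/negbT h]; first exact: Hmax.
    by rewrite vJ // normr0.
  rewrite -big_mkcond /= sumr_const mulr_natl le_eqVlt; apply/orP; left; apply/eqP.
  congr (_ *+ _); apply: eq_card => i; by rewrite inE.
rewrite ler_pM2r // in le1.
apply: le_trans le1 _; rewrite ler_nat /deg.
rewrite -(card_imset _ (@flip_inj n x)).
apply: subset_leq_card; apply/subsetP => u /imsetP [i]; rewrite inE => Hi ->.
by move: Hi; rewrite inE => ->; rewrite hadj_flip.
Qed.

End Huang.

End Part2.


Section Constr.
Variables n m : nat.
Hypothesis m_gt0 : 0 < m.
Hypothesis n_gt0 : 0 < n.
Hypothesis n_le : n <= m * m.

Definition marker (i : 'I_n) : bool := m %| i.
Definition blk (i j : 'I_n) : bool := i %/ m == j %/ m.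
Definition full (x : cube n) (j : 'I_n) : bool := [forall i, blk i j ==> x i].
Definition gfun (x : cube n) : bool := [exists j, marker j && full x j].
Definition bad (x : cube n) (j : 'I_n) : bool :=
  marker j && [exists i, [&& blk i j, ~~ marker i & ~~ x i]].
Definition i0 : 'I_n := Ordinal n_gt0.
Definition inF (x : cube n) : bool :=
  [forall i, ~~ marker i ==> x i] && [forall i, (marker i && (i != i0)) ==> ~~ x i].
Definition psi (x : cube n) : cube n :=
  if [pick j | bad x j] is Some j then flip x j
  else if inF x then x else flip x i0.
Definition pp (b : bool) : cube n := [ffun i => if marker i then b && (i == i0) else true].
Definition cc : bool := odd (weight (pp false)).
Definition SS : {set cube n} := [set x | gfun x == odd (weight x) (+) cc].

Lemma marker0 : marker i0.
Proof. by rewrite /marker dvdn0. Qed.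

Lemma markeq i j : marker i -> marker j -> blk i j -> i = j.
Proof.
rewrite /marker /blk => /divnK ei /divnK ej /eqP e; apply: val_inj => /=.
by rewrite -ei -ej e.
Qed.

Lemma blk_sym i j : blk i j = blk j i.
Proof. by rewrite /blk eq_sym. Qed.

Lemma blk_trans i j k : blk i j -> blk j k -> blk i k.
Proof. by rewrite /blk => /eqP -> . Qed.

Lemma blk_marker i : exists2 j, marker j & blk i j.
Proof.
have lt : i %/ m * m < n by apply: leq_ltn_trans (leq_trunc_div i m) (ltn_ord i).
exists (Ordinal lt); first by rewrite /marker /= dvdn_mull.
by rewrite /blk /= mulnK.
Qed.

Lemma full_flip_out x i k : ~~ blk i k -> full (flip x i) k = full x k.
Proof.
move=> nb; apply: eq_forallb => i'; rewrite flipE.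
case: (i' =P i) => [->|//]; by rewrite (negbTE nb).
Qed.

Lemma bad_flip_marker x j k : marker j -> bad (flip x j) k = bad x k.
Proof.
move=> Mj; rewrite /bad; congr (_ && _); apply: eq_existsb => i; rewrite flipE.
case: (i =P j) => [->|//]; by rewrite Mj /= andbF.
Qed.

Lemma pick_flip_marker x j : marker j ->
  [pick k | bad (flip x j) k] = [pick k | bad x k].
Proof. by move=> Mj; apply: eq_pick => k; rewrite bad_flip_marker. Qed.

Lemma g_flip_bad x j : bad x j -> gfun (flip x j) = gfun x.
Proof.
move=> Hb; have Mj : marker j by case/andP: Hb.
case/andP: Hb => _ /existsP [i /and3P [bij nMi nxi]].
apply: eq_existsb => k; congr (_ && _).
case: (boolP (blk j k)) => bjk; last by rewrite full_flip_out.
have bik : blk i k by apply: blk_trans bij bjk.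
have -> : full x k = false.
  by apply/negbTE/forallP => /(_ i); rewrite bik (negbTE nxi).
apply/negbTE/forallP => /(_ i); rewrite bik flipE.
case: (i =P j) => [e|_]; last by rewrite (negbTE nxi).
by move: nMi; rewrite e Mj.
Qed.

Lemma nobad_nonmarker x : [pick j | bad x j] = None -> forall i, ~~ marker i -> x i.
Proof.
move=> hp i nMi; case: (pickP (bad x)) hp => // h _.
have [j Mj bij] := blk_marker i.
move: (h j); rewrite /bad Mj /= => /negbT /existsPn /(_ i).
by rewrite bij nMi /= negbK.
Qed.

Lemma psi_inF x : inF x -> psi x = x.
Proof.
move=> Fx; rewrite /psi; case: pickP => [j Hb|_]; last by rewrite Fx.
case/andP: Fx => /forallP h _; case/andP: Hb => _ /existsP [i /and3P [_ nMi nxi]].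
by move: (h i); rewrite nMi (negbTE nxi).
Qed.

Lemma psi_props x : ~~ inF x ->
  [/\ exists i, psi x = flip x i, gfun (psi x) = gfun x,
      ~~ inF (psi x) & psi (psi x) = x].
Proof.
move=> nF.
case E: [pick j | bad x j] => [j|].
  have Hb : bad x j by move: E; case: pickP => // j' H [<-].
  have Mj : marker j by case/andP: Hb.
  have px : psi x = flip x j by rewrite /psi E.
  have ppx : psi (flip x j) = x by rewrite /psi pick_flip_marker // E flipK.
  rewrite px; split; first by exists j.
  - exact: g_flip_bad.
  - case/andP: (Hb) => _ /existsP [i /and3P [_ nMi nxi]].
    apply/negP => /andP [/forallP h _]; move: (h i); rewrite nMi /= flipE.
    case: (i =P j) => [e|_]; last by rewrite (negbTE nxi).
    by move: nMi; rewrite e Mj.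
  - exact: ppx.
have nb := nobad_nonmarker E.
have px : psi x = flip x i0 by rewrite /psi E (negbTE nF).
have [i /andP [Mi ni0] xi] : exists2 i, marker i && (i != i0) & x i.
  move: nF; rewrite /inF.
  have -> : [forall i, ~~ marker i ==> x i].
    by apply/forallP => i; apply/implyP; exact: nb.
  move=> /forallPn [i]; rewrite negb_imply negbK => /andP [h1 h2].
  by exists i.
have nblk : ~~ blk i0 i.
  apply: contra ni0 => b; apply/eqP; symmetry; apply: markeq => //.
  exact: marker0.
have fullx : full x i.
  apply/forallP => i'; apply/implyP => bi'.
  case: (boolP (marker i')) => [Mi'|]; last exact: nb.
  by rewrite (markeq Mi' Mi bi').
have gx : gfun x by apply/existsP; exists i; rewrite Mi.
rewrite px; split; first by exists i0.
- rewrite gx; apply/existsP; exists i.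
  by rewrite Mi full_flip_out.
- apply/negP => /andP [_ /forallP /(_ i)].
  by rewrite Mi ni0 /= flipE (negbTE ni0) xi.
- rewrite /psi pick_flip_marker ?marker0 // E.
  have -> : inF (flip x i0) = false.
    apply/negP => /andP [_ /forallP /(_ i)].
    by rewrite Mi ni0 /= flipE (negbTE ni0) xi.
  by rewrite flipK.
Qed.


Lemma psiK : involutive psi.
Proof.
move=> x; case: (boolP (inF x)) => [Fx|nF]; first by rewrite !psi_inF.
by case: (psi_props nF).
Qed.

Lemma xorb_neg (a b c : bool) : (a == ~~ b (+) c) = ~~ (a == b (+) c).
Proof. by case: a; case: b; case: c. Qed.

Lemma psi_SS x : ~~ inF x -> (psi x \in SS) = ~~ (x \in SS).
Proof.
move=> nF; case: (psi_props nF) => [[i ->] g _ _].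
move: g; rewrite !inE => ->; by rewrite weight_flip xorb_neg.
Qed.

Lemma inF_pp x : inF x -> x = pp (x i0).
Proof.
case/andP=> /forallP h1 /forallP h2; apply/ffunP => i; rewrite ffunE.
case: (boolP (marker i)) => Mi; last by move: (h1 i); rewrite Mi.
case: (i =P i0) => [->|/eqP ne]; first by rewrite andbT.
by move: (h2 i); rewrite Mi ne andbF /= => /negbTE.
Qed.

Lemma pp_inF b : inF (pp b).
Proof.
apply/andP; split; apply/forallP => i; apply/implyP; rewrite ffunE.
  by move/negbTE => ->.
by case/andP => -> /negbTE ->; rewrite andbF.
Qed.

Lemma pp_neq : pp false != pp true.
Proof.
apply/negP => /eqP /ffunP /(_ i0); rewrite !ffunE marker0 eqxx; by [].
Qed.

Lemma pp_flip : pp true = flip (pp false) i0.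
Proof.
apply/ffunP => i; rewrite flipE !ffunE.
case: (i =P i0) => [->|/eqP ne]; first by rewrite marker0.
by rewrite andbF; case: (marker i).
Qed.

Lemma g_pp_false : gfun (pp false) = false.
Proof.
apply/negbTE/existsPn => k; apply/negP => /andP [Mk /forallP /(_ k)].
by rewrite /blk eqxx ffunE Mk.
Qed.

Lemma g_pp_true : gfun (pp true) = true.
Proof.
apply/existsP; exists i0; rewrite marker0 /=; apply/forallP => i; apply/implyP => b.
rewrite ffunE; case: (boolP (marker i)) => // Mi.
by rewrite (markeq Mi marker0 b) eqxx.
Qed.

Lemma pp_SS b : pp b \in SS.
Proof.
rewrite inE /cc; case: b.
  by rewrite g_pp_true pp_flip weight_flip; case: (odd _).
by rewrite g_pp_false addbb.
Qed.

Lemma card_SS : #|SS| = (2 ^ n.-1 + 1)%N.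
Proof.
pose FS := [set x | inF x].
have eFS : FS = [set pp false; pp true].
  apply/setP => x; rewrite !inE; apply/idP/idP => [Fx|].
    by rewrite (inF_pp Fx); case: (x i0); rewrite eqxx ?orbT.
  by case/orP => /eqP ->; exact: pp_inF.
have cFS : #|FS| = 2 by rewrite eFS cards2 pp_neq.
have sub : FS \subset SS.
  by rewrite eFS; apply/subsetP => x; rewrite in_set2 => /orP [] /eqP ->; exact: pp_SS.
have e1 := cardsID FS SS.
rewrite (setIidPr sub) cFS in e1.
have inj : injective psi := can_inj psiK.
have le1 : #|SS :\: FS| <= #|~: SS|.
  rewrite -(card_imset _ inj); apply: subset_leq_card; apply/subsetP => y.
  case/imsetP => x /setDP [xS nF] ->; rewrite inE in nF.
  by rewrite in_setC psi_SS // xS.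
have le2 : #|~: SS| <= #|SS :\: FS|.
  rewrite -(card_imset _ inj); apply: subset_leq_card; apply/subsetP => y.
  case/imsetP => x; rewrite in_setC => xS ->.
  have nF : ~~ inF x.
    by apply: contra xS => Fx; move/subsetP: sub => /(_ x); rewrite inE; apply.
  case: (psi_props nF) => _ _ nF' _; apply/setDP; split; last by rewrite inE.
  by rewrite psi_SS // xS.
have e2 := cardsC SS; rewrite card_ffun card_bool card_ord in e2.
have h2 : 2 ^ n = 2 * 2 ^ n.-1 by rewrite -expnS prednK.
lia.
Qed.

Lemma deg_SS x : x \in SS -> deg SS x <= m.
Proof.
move=> xS.
pose Sens := [set i | gfun (flip x i) != gfun x].
have le1 : deg SS x <= #|Sens|.
  apply: leq_trans (leq_imset_card (flip x) Sens).
  apply: subset_leq_card; apply/subsetP => u; rewrite inE => /andP [uS /hadjP [i ei]].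
  apply/imsetP; exists i => //; rewrite inE.
  move: uS xS; rewrite ei !inE weight_flip => /eqP -> /eqP ->.
  by case: (odd _); case: cc.
apply: leq_trans le1 _.
case: (boolP (gfun x)) => gx.
  case/existsP: (gx) => k /andP [Mk fk].
  have sub : Sens \subset [set i | blk i k].
    apply/subsetP => i; rewrite !inE; apply: contraR => nb.
    rewrite gx eqb_id; apply/existsP; exists k; by rewrite Mk full_flip_out.
  apply: leq_trans (subset_leq_card sub) _.
  pose f (i : 'I_n) : 'I_m := Ordinal (ltn_pmod i m_gt0).
  rewrite -(@card_in_imset _ _ f); last first.
    move=> i j; rewrite !inE /blk => /eqP bi /eqP bj /(congr1 val) /= e.
    apply: val_inj; rewrite /= (divn_eq i m) (divn_eq j m) bi bj e //.
  by apply: leq_trans (max_card _) _; rewrite card_ord.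
have wit i : i \in Sens -> exists2 k, blk i k & [/\ ~~ x i & forall i', blk i' k -> i' != i -> x i'].
  rewrite inE (negbTE gx) eqbF_neg negbK => /existsP [k /andP [Mk fk]].
  have bik : blk i k.
    apply: contraT => nb; move: gx; apply: contraNT => _.
    apply/existsP; exists k; by rewrite Mk -(full_flip_out x nb).
  exists k => //; split.
    by move/forallP: fk => /(_ i); rewrite bik flipE eqxx /= => ->.
  move=> i' bi' ne; move/forallP: fk => /(_ i'); rewrite bi' flipE.
  by rewrite (negbTE ne).
have hlt (i : 'I_n) : i %/ m < m.
  by rewrite ltn_divLR //; exact: leq_trans (ltn_ord i) n_le.
pose f (i : 'I_n) : 'I_m := Ordinal (hlt i).
rewrite -(@card_in_imset _ _ f); last first.
  move=> i j Si Sj /(congr1 val) /= e.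
  have [k bik [xi hk]] := wit i Si.
  have [_ _ [xj _]] := wit j Sj.
  apply/eqP; apply: contraT => ne.
  have bjk : blk j k by rewrite /blk -e.
  by move: (hk j bjk); rewrite eq_sym (negbTE xj) => /(_ ne).
by apply: leq_trans (max_card _) _; rewrite card_ord.
Qed.

Lemma maxdeg_SS : maxdeg SS <= m.
Proof. by apply/bigmax_leqP => x xS; exact: deg_SS. Qed.

End Constr.


Lemma huang_R {n} {S : {set cube n}} : (0 < n)%N -> (2 ^ n.-1 < #|S|)%N ->
  exists2 x, x \in S & Rle (sqrt (INR n)) (INR (deg S x)).
Proof.
move=> n0 HS'.
have lam_gt0 : (0 < sqrt (INR n))%R.
  apply/RltP; apply: sqrt_lt_R0; apply: lt_0_INR; exact/ssrnat.ltP.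
have lam2 : (sqrt (INR n) ^+ 2 = n%:R)%R.
  rewrite GRing.expr2 -INRE; apply: sqrt_sqrt; apply: pos_INR.
have [x xS hx] := huang lam_gt0 lam2 n0 HS'.
exists x => //; move/RleP: hx; by rewrite -INRE.
Qed.

Lemma powE a b : Nat.pow a b = expn a b.
Proof. elim: b => [|b IH]; first by rewrite expn0. by rewrite expnS -IH /= multE. Qed.

From mathcomp Require Import all_boot.
From Stdlib Require Import Reals.
Delimit Scope R_scope with R.

Theorem theorem3p1 :
  (forall (n : nat), (2 <= n)%N ->
     forall S : {set cube n}, (2 ^ n.-1 + 1 <= #|S|)%N ->
       exists v : cube n, v \in S /\
         (INR (deg S v) >
            / 2 * log2 (INR n) - / 2 * log2 (log2 (INR n)) + / 2)%R)
  /\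
  (forall (n : nat), (1 <= n)%N ->
     exists S : {set cube n}, #|S| = (2 ^ n.-1 + 1)%N /\
       (INR (maxdeg S) < sqrt (INR n) + 1)%R).
Proof.
split.
- move=> n n2 S HS; rewrite powE in HS.
  have n0 : (0 < n)%N by apply: leq_trans n2.
  have HS' : (expn 2 n.-1 < #|S|)%N by rewrite addn1 in HS.
  have [x xS hx] := huang_R n0 HS'.
  exists x; split => //.
  have h2 := two_le_INR n (elimT ssrnat.leP n2).
  rewrite /Rgt; exact: Rlt_le_trans (real_part1 _ h2) hx.
- move=> n n1.
  have exm : exists k, (n <= k * k)%N by exists n; nia.
  case: (ex_minnP exm) => m hm hmin.
  have m0 : (0 < m)%N by case: m hm {hmin} => //; rewrite muln0 leqn0 => /eqP h; rewrite h in n1.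
  exists (SS m n1); split; first by rewrite powE; exact: card_SS.
  have hd := maxdeg_SS m0 n1 hm.
  case: m m0 hm hmin hd => // k _ hm hmin hd.
  have hk : (k * k < n)%N.
    rewrite ltnNge; apply/negP => h; move: (hmin k h); lia.
  apply: Rle_lt_trans (real_part2 k n (elimT ssrnat.ltP hk)).
  apply: le_INR; apply/ssrnat.leP; exact: hd.
Qed.
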